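(* Let $m\ge3$ be an integer and let $\mathbf{C}$ be a binary linear $[2^{2m-3}+2^{m-2}-1,\ 2m-2]$ code whose set of nonzero weights is $\{2^{2m-4},\,2^{2m-4}+2^{m-2}\}$. Then the code $\mathbf{C}'$ obtained from $\mathbf{C}$ by the extension construction is a minimal binary linear $[3\cdot2^{2m-4}-1,\ 2m-2,\ 2^{2m-4}]_2$ code with maximum weight $2^{2m-3}$ which violates the Ashikhmin–Barg condition. Moreover, when $m\ge4$, $\mathbf{C}'$ is self-orthogonal.
   Context: Extension construction for a binary $[N,K]$ code $\mathbf{D}$, $K\ge2$, with minimum nonzero weight $w_{min}$, maximum weight $w_{max}$ and $n'=2w_{min}-w_{max}\ge1$: choose a basis $\mathbf{r}_1,\dots,\mathbf{r}_K$ with $wt(\mathbf{r}_1)=w_{max}$, $wt(\mathbf{r}_2)=w_{min}$; the extended code is generated by $(\mathbf{1},\mathbf{r}_1),(\mathbf{0},\mathbf{r}_2),\dots,(\mathbf{0},\mathbf{r}_K)$ in $\mathbf{F}_2^{n'+N}$, with $\mathbf{1},\mathbf{0}\in\mathbf{F}_2^{n'}$. Self-orthogonal: $\mathbf{C}\subseteq\mathbf{C}^\perp$. Minimal code: nonzero codewords with nested supports are equal. Ashikhmin–Barg condition (binary): $w_{min}/w_{max}>1/2$. *)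

(* Defs.v *)
From HB Require Import structures.
From mathcomp Require Import all_boot all_order all_algebra.
Set Implicit Arguments. Unset Strict Implicit. Unset Printing Implicit Defensive.
Import Order.TTheory GRing.Theory Num.Theory.

Local Open Scope ring_scope.

Notation bcode n := {vspace 'rV['F_2]_n}.

Definition supp n (v : 'rV['F_2]_n) : {set 'I_n} := [set i | v 0 i != 0].
Definition wt n (v : 'rV['F_2]_n) : nat := #|supp v|.

Definition min_wt n (C : bcode n) : nat :=
  \big[minn/n.+1]_(v : 'rV['F_2]_n | (v \in C) && (v != 0)) wt v.
Definition max_wt n (C : bcode n) : nat :=
  \max_(v : 'rV['F_2]_n | v \in C) wt v.

Definition nonzero_weights_are n (C : bcode n) (a b : nat) : Prop :=
  forall w : nat, (exists2 v, (v \in C) && (v != 0) & wt v = w) <-> (w = a \/ w = b).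

Definition minimal_code n (C : bcode n) : Prop :=
  forall c1 c2, c1 \in C -> c2 \in C -> c1 != 0 -> c2 != 0 ->
    supp c1 \subset supp c2 -> c1 = c2.

Definition self_orthogonal n (C : bcode n) : Prop :=
  forall u v, u \in C -> v \in C -> u *m v^T = 0.

Definition ashikhmin_barg n (C : bcode n) : bool :=
  ((min_wt C)%:Q / (max_wt C)%:Q > 1 / 2)%R.

(* Extension construction: given the basis r = [:: r_1; ...; r_K] of a code of
   length N, the extended code of length n' + N is generated by
   (1, r_1), (0, r_2), ..., (0, r_K) with 1, 0 in F_2^{n'}. *)
Definition ext_vec n' N (first : bool) (r : 'rV['F_2]_N) : 'rV['F_2]_(n' + N) :=
  row_mx (if first then const_mx 1 else 0) r.

Definition ext_code n' N (r : seq 'rV['F_2]_N) : bcode (n' + N) :=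
  <<[seq ext_vec n' (i == 0)%N r`_i | i <- iota 0 (size r)]>>%VS.

(* Main.v *)
Require Import Defs.
From HB Require Import structures.
From mathcomp Require Import all_boot all_order all_algebra.
From mathcomp Require Import zify ring.
Import Order.TTheory GRing.Theory Num.Theory.
Local Open Scope ring_scope.

Module Aux1.

Lemma F2cases (x : 'F_2) : x = 0 \/ x = 1.
Proof. case: x => [[|[|//]]] /= H; [left|right]; exact: val_inj. Qed.

Lemma wtE n (v : 'rV['F_2]_n) : wt v = (\sum_i (v ord0 i != 0%R : nat))%N.
Proof.
rewrite /wt /supp cardsE -sum1_card big_mkcond /=; apply: eq_bigr => i _.
by rewrite unfold_in; case: (v ord0 i != 0).
Qed.

Lemma wt_row_mx n1 n2 (x : 'rV['F_2]_n1) (y : 'rV['F_2]_n2) :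
  wt (row_mx x y) = (wt x + wt y)%N.
Proof.
rewrite !wtE big_split_ord /=; congr (_ + _)%N; apply: eq_bigr => i _.
  by rewrite row_mxEl. by rewrite row_mxEr.
Qed.

Lemma wt0 n : wt (0 : 'rV['F_2]_n) = 0%N.
Proof. by rewrite wtE big1 // => i _; rewrite mxE eqxx. Qed.

Lemma wt1 n : wt (const_mx 1 : 'rV['F_2]_n) = n.
Proof. by rewrite wtE (eq_bigr (fun _ => 1%N)) ?sum1_card ?card_ord // => i _; rewrite mxE. Qed.

Lemma wt_eq0 n (v : 'rV['F_2]_n) : (wt v == 0%N) = (v == 0).
Proof.
apply/idP/eqP => [|->]; last by rewrite wt0.
rewrite /wt cards_eq0 => /eqP H; apply/rowP => j; rewrite mxE.
apply/eqP; apply: contraT => Hj.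
have : j \in supp v by rewrite inE.
by rewrite H inE.
Qed.

Lemma wt_add n (u v : 'rV['F_2]_n) :
  (wt (u + v) + 2 * #|supp u :&: supp v| = wt u + wt v)%N.
Proof.
rewrite !wtE cardsE -sum1_card big_distrr [X in (_ + X)%N]big_mkcond /= -!big_split /=.
apply: eq_bigr => i _; rewrite unfold_in /= !inE !mxE.
by case: (F2cases (u 0 i)) => ->; case: (F2cases (v 0 i)) => ->.
Qed.

Lemma dot_card n (u v : 'rV['F_2]_n) :
  (u *m v^T) 0 0 = (#|supp u :&: supp v|)%:R.
Proof.
rewrite !mxE cardsE -sum1_card natr_sum .
rewrite [RHS]big_mkcond; apply: eq_bigr => i _; rewrite unfold_in /= !mxE !inE.
case: (F2cases (u 0 i)) => ->; case: (F2cases (v 0 i)) => ->. all: by rewrite ?mulr0 ?mulr1 ?eqxx ?oner_eq0.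
Qed.

End Aux1.
Import Aux1.

Module Aux2.
Set Implicit Arguments. Unset Strict Implicit.

Section Ext.
Variables (n' N : nat) (C : bcode N) (r : seq 'rV['F_2]_N).
Hypothesis hr : basis_of C r.

Definition gen (i : nat) : 'rV['F_2]_(n' + N) := ext_vec n' (i == 0)%N r`_i.
Definition X : (size r).-tuple _ := map_tuple (fun i : 'I_(size r) => gen i) (ord_tuple (size r)).

Lemma ext_codeE : ext_code n' r = <<X>>%VS.
Proof.
rewrite /ext_code /=; congr (<< _ >>)%VS.
by rewrite -val_enum_ord -map_comp.
Qed.

Lemma XE (i : 'I_(size r)) : X`_i = gen i.
Proof. by rewrite -tnth_nth tnth_map tnth_ord_tuple. Qed.

Lemma spanr : <<r>>%VS = C.
Proof. by case/andP: hr => /eqP. Qed.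

Lemma freer : free r.
Proof. exact: basis_free hr. Qed.

Lemma rsub_sum (k : 'I_(size r) -> 'F_2) :
  rsubmx (\sum_i k i *: X`_i) = \sum_i k i *: r`_i.
Proof.
apply/rowP => j; rewrite mxE !summxE; apply: eq_bigr => i _.
by rewrite !mxE XE /gen /ext_vec row_mxEr.
Qed.

Lemma lsub_sum (k : 'I_(size r) -> 'F_2) :
  lsubmx (\sum_i k i *: X`_i) = const_mx (\sum_i k i * (if val i == 0%N then 1 else 0)).
Proof.
apply/rowP => j; rewrite !mxE !summxE; apply: eq_bigr => i _.
rewrite !mxE XE /gen /ext_vec row_mxEl.
by case: (val i == 0%N); rewrite mxE.
Qed.

Lemma ext_dec w : w \in ext_code n' r ->
  [/\ rsubmx w \in C, (lsubmx w = 0 \/ lsubmx w = const_mx 1)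
    & (rsubmx w = 0 -> lsubmx w = 0)].
Proof.
rewrite ext_codeE => /coord_span; set k := coord X => Hw.
have Hr : rsubmx w = \sum_i k i w *: r`_i by rewrite {1}Hw rsub_sum.
have Hl := lsub_sum (k^~ w); rewrite -Hw in Hl.
split.
- rewrite Hr -spanr; apply: memv_suml => i _; apply: memvZ; apply: memv_span.
  by apply: mem_nth.
- rewrite Hl; case: (F2cases (\sum_i k i w * (if val i == 0%N then 1 else 0))) => ->.
    by left; apply/rowP => j; rewrite !mxE.
  by right.
- move=> H0; rewrite Hl.
  have Hk := elimT (@freeP _ _ _ (in_tuple r)) freer (k^~ w); rewrite -Hr in Hk.
  apply/rowP => j; rewrite !mxE big1 // => i _; by rewrite Hk // mul0r.
Qed.

Lemma freeX : free X.
Proof.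
apply/freeP => k Hk i.
have := congr1 rsubmx Hk; rewrite rsub_sum => H.
have Hr := elimT (@freeP _ _ _ (in_tuple r)) freer k.
apply: Hr; rewrite H; apply/rowP => j; by rewrite !mxE.
Qed.

Lemma dim_ext : \dim (ext_code n' r) = size r.
Proof. by rewrite ext_codeE; move/eqP: freeX => ->; rewrite size_tuple. Qed.

Lemma gen_mem i : (i < size r)%N -> gen i \in ext_code n' r.
Proof.
move=> Hi; rewrite ext_codeE; apply: memv_span.
have -> : gen i = X`_(Ordinal Hi) by rewrite XE.
by rewrite mem_nth // size_tuple.
Qed.

End Ext.

Lemma oppF2 n (v : 'rV['F_2]_n) : - v = v.
Proof. by apply/rowP => j; rewrite !mxE; case: (F2cases (v 0 j)) => ->; apply: val_inj. Qed.

Lemma addF2 n (v : 'rV['F_2]_n) : v + v = 0.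
Proof. by rewrite -[X in X + _]oppF2 addNr. Qed.

Lemma lsubD m n1 n2 (u v : 'M['F_2]_(m, n1 + n2)) : lsubmx (u + v) = lsubmx u + lsubmx v.
Proof. by apply/matrixP => i j; rewrite !mxE. Qed.

Lemma wt_split n1 n2 (w : 'rV['F_2]_(n1 + n2)) : wt w = (wt (lsubmx w) + wt (rsubmx w))%N.
Proof. by rewrite -wt_row_mx hsubmxK. Qed.

Lemma wt_le n (v : 'rV['F_2]_n) : (wt v <= n)%N.
Proof. by rewrite /wt; apply: leq_trans (max_card _) _; rewrite card_ord. Qed.

Lemma bigmin_le (I : finType) (P : pred I) (F : I -> nat) x0 i0 :
  P i0 -> (\big[minn/x0]_(i | P i) F i <= F i0)%N.
Proof.
move=> Pi0; have : i0 \in index_enum I by rewrite mem_index_enum.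
elim: (index_enum I) => [|j s IH] //; rewrite inE big_cons => /orP [/eqP <-|Hs].
  by rewrite Pi0 geq_minl.
case: (P j); last exact: IH.
by apply: leq_trans (geq_minr _ _) (IH Hs).
Qed.

Section Gen.
Variables (a p n' N : nat) (C : bcode N) (r : seq 'rV['F_2]_N).
Hypotheses (hr : basis_of C r) (hsize : (2 <= size r)%N) (hp : (2 <= p)%N)
  (hap : (2 * p <= a)%N) (hn' : n' = (a - p)%N)
  (hw : nonzero_weights_are C a (a + p))
  (hr1 : wt r`_0 = (a + p)%N) (hr2 : wt r`_1 = a).

Let C' := ext_code n' r.

Lemma desc w : w \in C' -> w != 0 ->
  exists2 x, (x = a \/ x = a + p)%N &
   (lsubmx w = 0 /\ wt w = x) \/ (lsubmx w = const_mx 1 /\ wt w = (n' + x)%N).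
Proof.
move=> /(ext_dec hr) [Hc HL H0] Hw.
have Hc0 : rsubmx w != 0.
  apply: contra Hw => /eqP Hc0; rewrite -(hsubmxK w) Hc0 H0 //.
  by apply/eqP/matrixP => i j; rewrite !mxE; case: split_ordP => k _; rewrite mxE.
have [Hx _] := hw (wt (rsubmx w)).
have {}Hx : (wt (rsubmx w) = a \/ wt (rsubmx w) = a + p)%N.
  by apply: Hx; exists (rsubmx w); rewrite ?Hc ?Hc0.
exists (wt (rsubmx w)) => //.
rewrite wt_split; case: HL => ->; [left|right]; split=> //; by rewrite ?wt0 ?wt1.
Qed.

Lemma desc0 w : w \in C' -> (4 %| p)%N -> (4 %| a)%N -> (4 %| wt w)%N.
Proof.
move=> Hw H4p H4a; have [->|Hn] := eqVneq w 0; first by rewrite wt0.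
have [x Hx [[_ ->]|[_ ->]]] := desc Hw Hn; rewrite ?hn'; lia.
Qed.

Lemma g0 : gen n' r 0 \in C' /\ wt (gen n' r 0) = (n' + (a + p))%N.
Proof. split; first by apply: gen_mem; lia.
by rewrite /gen /ext_vec wt_row_mx wt1 hr1. Qed.

Lemma g1 : gen n' r 1 \in C' /\ wt (gen n' r 1) = a.
Proof. split; first by apply: gen_mem; lia.
by rewrite /gen /ext_vec wt_row_mx wt0 hr2. Qed.

Lemma gen_main :
  [/\ minimal_code C', min_wt C' = a, max_wt C' = (2 * a)%N
    & ((4 %| p)%N -> (4 %| a)%N -> self_orthogonal C')].
Proof.
split.
- move=> c1 c2 H1 H2 H1n H2n Hs; apply/eqP; apply: contraT => Hne.
  have Hd : c1 + c2 \in C' by apply: memvD.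
  have Hdn : c1 + c2 != 0.
    by apply: contra Hne; rewrite addr_eq0 oppF2.
  have Hwt := @wt_add _ c1 c2; move/setIidPl: Hs => Hs; rewrite Hs in Hwt; change #|supp c1| with (wt c1) in Hwt.
  have HL := lsubD c1 c2.
  have [x1 Hx1 D1] := desc H1 H1n.
  have [x2 Hx2 D2] := desc H2 H2n.
  have [x3 Hx3 D3] := desc Hd Hdn.
  case: D1 => [[L1 W1]|[L1 W1]]; case: D2 => [[L2 W2]|[L2 W2]];
  case: D3 => [[L3 W3]|[L3 W3]]; rewrite ?W1 ?W2 ?W3 in Hwt; try lia;
  move: HL; rewrite L1 L2 L3 ?addr0 ?add0r ?addF2;
  (have Hn0 : (0 < n')%N by lia);
  move=> /matrixP/(_ 0 (Ordinal Hn0)); rewrite !mxE;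
  move=> /esym/eqP; rewrite oner_eq0; exact: id.
- rewrite /min_wt; apply/eqP; rewrite eqn_leq; apply/andP; split.
    have [Hg Hgw] := g1.
    rewrite -Hgw; apply: bigmin_le; rewrite Hg /= -wt_eq0 Hgw -lt0n; lia.
  apply: (big_ind (fun x => a <= x)%N).
  + have := wt_le r`_1; rewrite hr2; lia.
  + by move=> x y Hx Hy; rewrite leq_min Hx Hy.
  + move=> v /andP [Hv Hn]; have [x Hx [[_ ->]|[_ ->]]] := desc Hv Hn; lia.
- rewrite /max_wt; apply/eqP; rewrite eqn_leq; apply/andP; split.
    apply/bigmax_leqP => v Hv; have [->|Hn] := eqVneq v 0; first by rewrite wt0.
    have [x Hx [[_ ->]|[_ ->]]] := desc Hv Hn; lia.
  have [Hg Hgw] := g0; apply: leq_trans (leq_bigmax_cond _ Hg); rewrite Hgw; lia.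
- move=> H4p H4a u v Hu Hv; apply/matrixP => i j; rewrite !ord1 dot_card mxE.
  have := @wt_add _ u v; have := desc0 Hu H4p H4a; have := desc0 Hv H4p H4a.
  have Huv : ((u : 'rV['F_2]_(n' + N)) + (v : 'rV['F_2]_(n' + N))) \in C' := memvD Hu Hv.
  have := desc0 Huv H4p H4a.
  set I := #|_| => h1 h2 h3 h4.
  clearbody I; have -> : I = (2 * (I %/ 2))%N by lia.
  have two0 : (2%:R : 'F_2) = 0 by apply: val_inj.
  by rewrite natrM two0 mul0r.
Qed.

End Gen.

End Aux2.
Import Aux2.

Theorem proposition5p4 (m : nat) (hm : (3 <= m)%N)
  (C : bcode (2 ^ (2 * m - 3) + 2 ^ (m - 2) - 1))
  (hdim : \dim C = (2 * m - 2)%N)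
  (hw : nonzero_weights_are C (2 ^ (2 * m - 4)) (2 ^ (2 * m - 4) + 2 ^ (m - 2)))
  (r : seq 'rV['F_2]_(2 ^ (2 * m - 3) + 2 ^ (m - 2) - 1))
  (hr : basis_of C r)
  (hr1 : wt r`_0 = (2 ^ (2 * m - 4) + 2 ^ (m - 2))%N)
  (hr2 : wt r`_1 = (2 ^ (2 * m - 4))%N) :
  let n' := (2 * 2 ^ (2 * m - 4) - (2 ^ (2 * m - 4) + 2 ^ (m - 2)))%N in
  let C' := ext_code n' r in
  [/\ (n' + (2 ^ (2 * m - 3) + 2 ^ (m - 2) - 1) = 3 * 2 ^ (2 * m - 4) - 1)%N,
      minimal_code C' /\ \dim C' = (2 * m - 2)%N,
      min_wt C' = (2 ^ (2 * m - 4))%N /\ max_wt C' = (2 ^ (2 * m - 3))%N,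
      ~~ ashikhmin_barg C'
    & ((4 <= m)%N -> self_orthogonal C')].
Proof.
move=> n' C'.
have ha2 : (2 ^ (2 * m - 3) = 2 * 2 ^ (2 * m - 4))%N.
  by rewrite -expnS; congr (_ ^ _)%N; lia.
have ha : (2 ^ (2 * m - 4) = 2 ^ (m - 2) * 2 ^ (m - 2))%N.
  by rewrite -expnD; congr (_ ^ _)%N; lia.
have hp : (2 <= 2 ^ (m - 2))%N.
  by rewrite -[X in (X <= _)%N]expn1 leq_exp2l //; lia.
have hap : (2 * 2 ^ (m - 2) <= 2 ^ (2 * m - 4))%N.
  by rewrite ha leq_mul2r hp orbT.
have hsz : size r = (2 * m - 2)%N.
  by rewrite -hdim (size_basis (X := in_tuple r)) // size_tuple.
have hn' : n' = (2 ^ (2 * m - 4) - 2 ^ (m - 2))%N by rewrite /n'; lia.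
have hs2 : (2 <= size r)%N by rewrite hsz; lia.
have [Hmin Hmw HMw Hso] := gen_main hr hs2 hp hap hn' hw hr1 hr2.
have HMw' : max_wt C' = (2 ^ (2 * m - 3))%N by rewrite HMw [RHS]ha2.
split.
- rewrite hn'; move: hap hp; rewrite ha2; lia.
- by split=> //; rewrite /C' (dim_ext _ hr) hsz.
- by split.
- rewrite /ashikhmin_barg Hmw HMw.
  have a0 : (2 ^ (2 * m - 4))%:R != 0 :> rat by rewrite pnatr_eq0 -lt0n expn_gt0.
  have -> : (2 ^ (2 * m - 4))%:R / (2 * 2 ^ (2 * m - 4))%:R = 1 / 2 :> rat.
    by rewrite natrM; field.
  by rewrite ltxx.
- move=> h4; apply: Hso.
    rewrite (_ : (m - 2 = 2 + (m - 4))%N); last by lia.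
    by rewrite expnD dvdn_mulr.
  rewrite ha; apply: dvdn_mulr.
  rewrite (_ : (m - 2 = 2 + (m - 4))%N); last by lia.
  by rewrite expnD dvdn_mulr.
Qed.
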